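(* Let $b\ge2$ be an integer and let $w=d_1\dots d_p$ be a fixed block of $b$-ary digits with $p\ge1$. Let $u=d_1\dots d_{p-1}$ and $v=d_2\dots d_p$. For every $k\ge1$, the following identity of formal Laurent series in $t$ holds: $$Z_w(k)=t^{2-p}\bigl(t^{2-p}Z_w(v,0,u)\bigr)^{k-1}Z_w(v,0)^2.$$
   Context: Strings are finite sequences over $\{0,\dots,b-1\}$, including the empty string $\epsilon$. $k_w(X)$ is the number of possibly overlapping occurrences of $w$ in $X$. $Z_w(k)=\sum_l N_w(k,l)t^l$, where $N_w(k,l)$ is the number of strings of length $l$ with $k_w(X)=k$. For strings $x,y$, $Z_w(x,0,y)=\sum_lc_lt^l$, where $c_l$ is the number of strings of length $l$ with $k_w=0$, prefix $x$ and suffix $y$. Also $Z_w(x,0)=Z_w(x,0,\epsilon)$. When $p=1$, $u=v=\epsilon$. *)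

(* Defs.v *)
From mathcomp Require Import all_boot all_order all_algebra.
Set Implicit Arguments. Unset Strict Implicit. Unset Printing Implicit Defensive.
Import GRing.Theory Num.Theory.

Definition occ (b : nat) (w X : seq 'I_b) : nat :=
  count (fun i => (i + size w <= size X) && (take (size w) (drop i X) == w))
        (iota 0 (size X).+1).

(* Formal power series with nat coefficients: nat -> nat (coefficient of t^l). *)

Definition Nw (b : nat) (w : seq 'I_b) (k l : nat) : nat :=
  #|[pred X : l.-tuple 'I_b | occ w X == k]|.
Definition Zw (b : nat) (w : seq 'I_b) (k : nat) : nat -> nat := Nw w k.

Definition Zw0 (b : nat) (w x y : seq 'I_b) : nat -> nat :=
  fun l => #|[pred X : l.-tuple 'I_b |
               [&& occ w X == 0, prefix x X & suffix y X]]|.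
Definition Zw0p (b : nat) (w x : seq 'I_b) : nat -> nat := Zw0 w x [::].

(* Formal Laurent series with nat coefficients: t^shift * (power series). *)
Record laurent := Laurent { lshift : int; lps : nat -> nat }.

Definition lcoef (L : laurent) (n : int) : nat :=
  match (n - lshift L)%R with Posz m => lps L m | Negz _ => 0 end.

Definition leq_laurent (L1 L2 : laurent) : Prop :=
  forall n : int, lcoef L1 n = lcoef L2 n.

Definition ps (f : nat -> nat) : laurent := Laurent 0 f.

Definition lmul (L1 L2 : laurent) : laurent :=
  Laurent (lshift L1 + lshift L2)%R
          (fun n => \sum_(i < n.+1) lps L1 i * lps L2 (n - i)).

Definition lone : laurent := ps (fun n => (n == 0)%N : nat).

Definition tpow (m : int) : laurent := Laurent m (fun n => (n == 0)%N : nat).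

Definition lexp (L : laurent) (n : nat) : laurent := iter n (lmul L) lone.

(* Main.v *)
Require Import Defs.
From mathcomp Require Import all_boot all_order all_algebra zify.
Set Implicit Arguments. Unset Strict Implicit. Unset Printing Implicit Defensive.

Module P1.

Section Strs.
Variable b : nat.
Notation Sq := (seq 'I_b).

Fixpoint strs (n : nat) : seq Sq :=
  if n is n'.+1 then [seq x :: s | x <- enum 'I_b, s <- strs n'] else [:: [::]].

Definition cnt n (P : pred Sq) := count P (strs n).

Lemma mem_strs n s : (s \in strs n) = (size s == n).
Proof.
elim: n s => [|n IH] [|x s] //=.
all: try (by rewrite inE).
- by apply/allpairsP; case=> [[y t]] /= [_ _].
- apply/allpairsP/idP => [[[y t]] /= [_ ht] [_ ->]|hs].
    by move: ht; rewrite IH.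
  by exists (x, s); rewrite /= mem_enum IH.
Qed.

Lemma strs_uniq n : uniq (strs n).
Proof.
elim: n => [|n IH] //=; apply: allpairs_uniq => //; first exact: enum_uniq.
by move=> [x1 s1] [x2 s2] _ _ /= [-> ->].
Qed.

Lemma cnt_S n P : cnt n.+1 P = \sum_(x <- enum 'I_b) cnt n (fun s => P (x :: s)).
Proof.
rewrite /cnt /= count_flatten sumnE !big_map; apply: eq_bigr => x _.
by rewrite count_map.
Qed.

Lemma cnt0 P : cnt 0 P = P [::].
Proof. by rewrite /cnt /= addn0. Qed.

Lemma eq_cnt n P Q : (forall s, size s = n -> P s = Q s) -> cnt n P = cnt n Q.
Proof.
move=> h; apply: eq_in_count => s; rewrite mem_strs => /eqP; exact: h.
Qed.

Lemma cnt_prod m n (f g : pred Sq) :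
  cnt (m + n) (fun Y => f (take m Y) && g (drop m Y)) = cnt m f * cnt n g.
Proof.
elim: m f => [|m IH] f.
  rewrite cnt0 add0n.
  transitivity (cnt n (fun Y => f [::] && g Y)); first by apply: eq_cnt => s _; rewrite take0 drop0.
  case: (f [::]) => /=; first by rewrite mul1n.
  by rewrite mul0n /cnt (eq_count (a2:=pred0)) ?count_pred0.
rewrite addSn cnt_S cnt_S big_distrl /=; apply: eq_bigr => x _.
by rewrite -IH.
Qed.

Lemma card_cnt n (P : pred Sq) : #|[pred X : n.-tuple 'I_b | P X]| = cnt n P.
Proof.
rewrite cardE /enum_mem size_filter /= -enumT.
rewrite (eq_count (a2 := preim val P)) // -count_map /cnt.
apply/permP; apply: uniq_perm.
- rewrite map_inj_uniq ?enum_uniq //; exact: val_inj.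
- exact: strs_uniq.
move=> s; rewrite mem_strs; apply/mapP/idP => [[t _ ->]|hs].
  by rewrite size_tuple.
by exists (Tuple hs); rewrite ?mem_enum.
Qed.

Lemma cnt_pred1 n (x : Sq) : size x = n -> cnt n (pred1 x) = 1.
Proof.
move=> hx; rewrite /cnt count_uniq_mem ?strs_uniq // mem_strs hx eqxx //=.
Qed.

Lemma cnt_predT n : cnt n predT = b ^ n.
Proof.
elim: n => [|n IH]; first by rewrite cnt0.
rewrite cnt_S (eq_bigr (fun _ => b ^ n)) // big_const_seq count_predT size_enum_ord.
by rewrite iter_addn_0 expnS mulnC.
Qed.

End Strs.

End P1.
Import P1.

Module P2.

Section Win.
Variable b : nat.
Variable w : seq 'I_b.
Hypothesis hw : 0 < size w.
Notation p := (size w).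
Notation u := (take (size w).-1 w).
Notation v := (behead w).

Definition win (X : seq 'I_b) i := (i + size w <= size X) && (take (size w) (drop i X) == w).

Lemma occE X : occ w X = count (win X) (iota 0 (size X).+1).
Proof. by []. Qed.

Lemma win_catl s t i : i + p <= size s -> win (s ++ t) i = win s i.
Proof.
move=> h; rewrite /win size_cat h (leq_trans h (leq_addr _ _)) /=.
rewrite drop_cat ifT; last by lia.
rewrite take_cat; case: ifP => // /negbT; rewrite size_drop => h2.
have -> : p = size (drop i s) by rewrite size_drop; lia.
by rewrite take_size size_drop subnn take0 cats0.
Qed.

Lemma win_catr s t i : size s <= i -> win (s ++ t) i = win t (i - size s).
Proof.
move=> h; rewrite /win size_cat drop_cat ifF; last by lia.
congr andb; apply/idP/idP; lia.
Qed.

Lemma win_out X i : size X < i + p -> win X i = false.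
Proof. by move=> h; rewrite /win leqNgt h. Qed.

Lemma count_iota_tail X a c : size X < a + p ->
  count (win X) (iota 0 (a + c)) = count (win X) (iota 0 a).
Proof.
move=> h; rewrite iotaD count_cat add0n.
suff -> : count (win X) (iota a c) = 0 by rewrite addn0.
rewrite (eq_in_count (a2 := pred0)) ?count_pred0 // => i.
rewrite mem_iota => /andP[h1 _]; apply: win_out; lia.
Qed.

Lemma occ_iota X N : size X < N + p -> occ w X = count (win X) (iota 0 N).
Proof.
move=> h; rewrite occE.
case: (leqP N (size X).+1) => hN.
  by rewrite -(subnKC hN) count_iota_tail.
rewrite -(subnKC (ltnW hN)) count_iota_tail //; lia.
Qed.

Lemma w_split : w = u ++ drop (size w).-1 w.
Proof. by rewrite cat_take_drop. Qed.

Lemma occ_cat A C : occ w (A ++ w ++ C) = occ w (A ++ u) + 1 + occ w (v ++ C).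
Proof.
set n := size A; set c := size C.
have su : size u = p.-1 by rewrite size_takel // leq_pred.
have sv : size v = p.-1 by rewrite size_behead.
have sY : size (A ++ w ++ C) = n + p + c by rewrite !size_cat; lia.
rewrite occE sY.
have -> : (n + p + c).+1 = n + (1 + (p + c)) by lia.
rewrite iotaD count_cat add0n iotaD count_cat /= addn0.
rewrite addnA; congr (_ + _ + _).
- rewrite (occ_iota (N := n)); last by rewrite size_cat su; lia.
  apply: eq_in_count => i; rewrite mem_iota => /andP[_ hi].
  rewrite catA {1}w_split catA -catA win_catl // size_cat su; lia.
- rewrite win_catr ?leqnn // subnn /win add0n size_cat leq_addr drop0 take_size_cat //.
  by rewrite eqxx.
- rewrite (occ_iota (N := p + c)); last by rewrite size_cat sv; lia.
  have -> : iota (n+1) (p+c) = map (addn (n+1)) (iota 0 (p+c)) by rewrite -iotaDl addn0.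
  rewrite count_map; apply: eq_in_count => i _ /=.
  case: w hw => [//|d1 v0] _ /=.
  have -> : A ++ d1 :: v0 ++ C = (A ++ [:: d1]) ++ (v0 ++ C) by rewrite -catA.
  rewrite win_catr size_cat /= -/n; last by lia.
  by have -> : n + 1 + i - (n + 1) = i by lia.
Qed.

Lemma occ_catl_le s t : occ w s <= occ w (s ++ t).
Proof.
rewrite (occE (s ++ t)) size_cat.
have -> : (size s + size t).+1 = (size s).+1 + size t by lia.
rewrite iotaD count_cat occE.
apply: leq_trans (leq_addr _ _).
apply: sub_count => i /= h.
by rewrite win_catl //; case/andP: h.
Qed.

Lemma occ_catr_le s t : occ w t <= occ w (s ++ t).
Proof.
rewrite (occE (s ++ t)) size_cat.
have -> : (size s + size t).+1 = size s + (size t).+1 by lia.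
rewrite iotaD count_cat occE add0n.
apply: leq_trans (leq_addl _ _).
have -> : iota (size s) (size t).+1 = map (addn (size s)) (iota 0 (size t).+1) by rewrite -iotaDl addn0.
rewrite count_map leq_eqVlt; apply/orP; left; apply/eqP.
apply: eq_count => i /=; rewrite win_catr ?leq_addr //.
by have -> : size s + i - size s = i by lia.
Qed.

End Win.

End P2.
Import P2.

Module P3.

Definition conv (f g : nat -> nat) n := \sum_(i < n.+1) f i * g (n - i).

Section Split.
Variable b : nat.
Variable w : seq 'I_b.
Hypothesis hw : 0 < size w.
Notation p := (size w).
Notation u := (take (size w).-1 w).
Notation v := (behead w).
Notation win := (win w).
Notation cnt := (@cnt b).

Definition EP (P : seq 'I_b) a := cnt a (fun A => [&& occ w A == 0, prefix P A & suffix u A]).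
Definition T k c := cnt c (fun C => prefix v C && (occ w C == k)).
Definition fo (Y : seq 'I_b) := find (win Y) (iota 0 (size Y).+1).

Lemma su : size u = p.-1.
Proof. by rewrite size_takel // leq_pred. Qed.
Lemma sv : size v = p.-1.
Proof. by rewrite size_behead. Qed.

Lemma cnt_split n P Q : cnt n P = cnt n (fun x => P x && Q x) + cnt n (fun x => P x && ~~ Q x).
Proof. by rewrite /cnt; elim: (strs b n) => //= x s ->; case: (P x); case: (Q x) => /=; lia. Qed.

Lemma sum_eq_ord N (x : nat) : \sum_(i < N) ((x == i :> nat) : nat) = (x < N).
Proof.
elim: N => [|N IH]; first by rewrite big_ord0.
by rewrite big_ord_recr /= IH ltnS; case: (ltngtP x N).
Qed.

Lemma fo_eq Y i : win Y i -> i < (size Y).+1 ->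
  (fo Y == i) = (count (win Y) (iota 0 i) == 0).
Proof.
move=> hi hiY; rewrite /fo -(subnKC (ltnW hiY)) iotaD add0n find_cat.
have -> : iota i ((size Y).+1 - i) = i :: iota i.+1 ((size Y).+1 - i).-1.
  by case E : ((size Y).+1 - i) => [|z] /=; [lia | ].
rewrite /= hi addn0 size_iota has_count.
case E : (count (win Y) (iota 0 i)) => [|z] /=; first by rewrite !eqxx.
apply/negbTE; rewrite neq_ltn.
have := has_find (win Y) (iota 0 i); rewrite has_count E size_iota => <-; done.
Qed.

Lemma prefix_catl (P s t : seq 'I_b) : size P <= size s -> prefix P (s ++ t) = prefix P s.
Proof. by move=> h; rewrite !prefixE take_cat; case: ltngtP h => // ->; rewrite subnn take0 cats0 take_size. Qed.

Lemma key A C (P : seq 'I_b) k i : size A = i -> size P <= p.-1 ->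
  (prefix P (A ++ w ++ C) && (occ w (A ++ w ++ C) == k.+1)) && (fo (A ++ w ++ C) == i)
  = ((occ w (A ++ u) == 0) && prefix P (A ++ u)) && (occ w (v ++ C) == k).
Proof.
move=> <- hP.
have hY : A ++ w ++ C = (A ++ u) ++ (drop p.-1 w ++ C).
  by rewrite -catA (catA u) -(w_split w).
have hwin : win (A ++ w ++ C) (size A).
  by rewrite win_catr // subnn /P2.win add0n size_cat leq_addr drop0 take_size_cat // eqxx.
rewrite fo_eq //; last by rewrite !size_cat; lia.
have -> : count (win (A ++ w ++ C)) (iota 0 (size A)) = occ w (A ++ u).
  rewrite (occ_iota hw (N := size A)); last by rewrite size_cat su; lia.
  apply: eq_in_count => j; rewrite mem_iota => /andP[_ hj].
  rewrite hY win_catl // size_cat su; lia.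
rewrite occ_cat // hY prefix_catl; last by rewrite size_cat su (leq_trans hP) ?leq_addl.
case: (occ w (A ++ u) =P 0) => [->|]; last by rewrite andbF andFb.
by rewrite add0n add1n eqSS andbT andbC.
Qed.

Lemma cnt_false n (P : pred (seq 'I_b)) : (forall s, size s = n -> P s = false) -> cnt n P = 0.
Proof. by move=> h; rewrite (eq_cnt (Q := pred0)) /P1.cnt ?count_pred0. Qed.

Lemma fo_win Y i : fo Y = i -> i < (size Y).+1 -> win Y i.
Proof.
move=> hf h; have hh : has (win Y) (iota 0 (size Y).+1).
  by rewrite has_find size_iota -/(fo Y) hf.
by have := nth_find 0 hh; rewrite -/(fo Y) hf nth_iota.
Qed.

Lemma EP_prod (P : seq 'I_b) i :
  EP P (i + p.-1) = cnt i (fun X => (occ w (X ++ u) == 0) && prefix P (X ++ u)).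
Proof.
rewrite /EP -[RHS]muln1 -(cnt_pred1 su) -cnt_prod; apply: eq_cnt => A hA /=.
rewrite suffixE su hA addnK.
case E : (drop i A == u); last by rewrite !andbF.
have hA' : A = take i A ++ u by rewrite -(eqP E) cat_take_drop.
by rewrite [in LHS]hA' !andbT.
Qed.

Lemma T_prod k c : T k (p.-1 + c) = cnt c (fun C => occ w (v ++ C) == k).
Proof.
rewrite /T -[RHS]mul1n -(cnt_pred1 sv) -cnt_prod; apply: eq_cnt => C hC /=.
rewrite prefixE sv.
case E : (take p.-1 C == v) => //=.
by rewrite -(eqP E) cat_take_drop.
Qed.

Lemma step_i (P : seq 'I_b) k l i : size P <= p.-1 -> i + p <= l ->
  cnt l (fun Y => (prefix P Y && (occ w Y == k.+1)) && (fo Y == i))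
  = EP P (i + p.-1) * T k (l - i - 1).
Proof.
move=> hP hil; set c := l - i - p.
have hl : l = i + (p + c) by rewrite /c; lia.
have -> : l - i - 1 = p.-1 + c by rewrite /c; lia.
rewrite EP_prod T_prod hl.
transitivity (cnt (i + (p + c)) (fun Y =>
   ((occ w (take i Y ++ u) == 0) && prefix P (take i Y ++ u)) &&
   (pred1 w (take p (drop i Y)) && (occ w (v ++ drop p (drop i Y)) == k)))).
  apply: eq_cnt => Y hY.
  have hA : size (take i Y) = i by rewrite size_takel // hY leq_addr.
  case E : (take p (drop i Y) == w) => /=.
    set A := take i Y; set C := drop p (drop i Y).
    have hY' : Y = A ++ w ++ C by rewrite -(eqP E) !cat_take_drop.
    by rewrite E andTb [in LHS]hY' key.
  rewrite E andFb andbF; case: (fo Y =P i) => [hf|]; last by rewrite andbF.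
  have hi : i < (size Y).+1 by rewrite hY; lia.
  have := fo_win hf hi.
  by rewrite /P2.win E andbF.
rewrite (cnt_prod i (p+c) (fun X => (occ w (X ++ u) == 0) && prefix P (X ++ u))
  (fun Z => pred1 w (take p Z) && (occ w (v ++ drop p Z) == k))).
by rewrite (cnt_prod p c (pred1 w) (fun C => occ w (v ++ C) == k)) cnt_pred1 // mul1n.
Qed.

Lemma step_i0 (P : seq 'I_b) k l i : l < i + p -> i < l.+1 ->
  cnt l (fun Y => (prefix P Y && (occ w Y == k.+1)) && (fo Y == i)) = 0.
Proof.
move=> h1 h2; apply: cnt_false => Y hY.
case: (fo Y =P i) => [hf|]; last by rewrite andbF.
have := fo_win hf; rewrite hY => /(_ h2).
by rewrite /P2.win hY leqNgt h1.
Qed.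

Lemma partition (P : seq 'I_b) k l :
  cnt l (fun Y => prefix P Y && (occ w Y == k.+1)) =
  \sum_(i < l.+1) cnt l (fun Y => (prefix P Y && (occ w Y == k.+1)) && (fo Y == i)).
Proof.
rewrite /P1.cnt.
have : {in strs b l, forall Y, size Y = l} by move=> Y; rewrite mem_strs => /eqP.
elim: (strs b l) => [|Y s IH] hs /=; first by rewrite big1.
rewrite big_split /= -IH; last by move=> Z hZ; apply: hs; rewrite inE hZ orbT.
congr (_ + _).
case Q : (prefix P Y && (occ w Y == k.+1)) => /=; last by rewrite big1.
rewrite sum_eq_ord -(hs Y (mem_head _ _)).
have : has (win Y) (iota 0 (size Y).+1).
  by rewrite has_count -occE; case/andP: Q => _ /eqP ->.
by rewrite has_find size_iota => ->.
Qed.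

Lemma EP_small (P : seq 'I_b) a : a < p.-1 -> EP P a = 0.
Proof.
move=> h; apply: cnt_false => A hA.
suff -> : suffix u A = false by rewrite !andbF.
apply/negbTE/negP; rewrite suffixE => /eqP/(congr1 size); rewrite size_drop su hA; lia.
Qed.

Lemma T_small k c : c < p.-1 -> T k c = 0.
Proof.
move=> h; apply: cnt_false => C hC.
suff -> : prefix v C = false by [].
apply/negbTE/negP; rewrite prefixE => /eqP/(congr1 size); rewrite size_take sv hC.
case: ifP; lia.
Qed.

Lemma split_lemma (P : seq 'I_b) k l m : size P <= p.-1 -> l + p = m + 2 ->
  cnt l (fun Y => prefix P Y && (occ w Y == k.+1)) = conv (EP P) (T k) m.
Proof.
move=> hP hlm.
rewrite partition big_ord_recr /= step_i0 ?addn0 //; last by lia.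
rewrite /conv.
have hm : m.+1 = p.-1 + l by lia.
rewrite hm big_split_ord /= [X in _ = X + _]big1 ?add0n; last by move=> i _; rewrite EP_small.
apply: eq_bigr => i _ /=; have hi := ltn_ord i.
case: (leqP (i + p) l) => h.
  rewrite step_i // addnC.
  by have -> : m - (p.-1 + i) = l - i - 1 by lia.
rewrite step_i0 //; last by lia.
rewrite T_small ?muln0 //; lia.
Qed.

Lemma drop_catl (A X : seq 'I_b) j : j <= size A -> drop j (A ++ X) = drop j A ++ X.
Proof.
rewrite drop_cat; case: ltnP => // h1 h2.
have -> : j = size A by lia.
by rewrite subnn drop0 drop_size.
Qed.

Lemma occ_pos (Y : seq 'I_b) : (occ w Y != 0) = has (win Y) (iota 0 (size Y).+1).
Proof. by rewrite has_count occE lt0n. Qed.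

Lemma win_occ (Y : seq 'I_b) j : win Y j -> occ w Y != 0.
Proof.
move=> h; rewrite occ_pos; apply/hasP; exists j => //.
rewrite mem_iota add0n; move: h; rewrite /P2.win => /andP[h _]; lia.
Qed.

Lemma right_lemma (A X : seq 'I_b) : size X = 1 ->
  (occ w A == 0) && (occ w (A ++ X) != 0) =
  ((occ w A == 0) && suffix u A) && (X == drop p.-1 w).
Proof.
move=> hX; case h0 : (occ w A == 0) => //=.
apply/idP/idP.
  rewrite occ_pos => /hasP[j0 _ hj0].
  have [j hj] : exists j : nat, win (A ++ X) j by exists j0.
  have hj' := hj; move: hj'; rewrite /P2.win size_cat hX => /andP[hjl /eqP ht].
  case: (leqP (j + p) (size A)) => hjA.
    by move: (win_occ (Y := A) (j := j)); rewrite -(@win_catl _ _ hw A X j hjA) => /(_ hj); rewrite h0.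
  have hd : drop j (A ++ X) = drop j A ++ X by rewrite drop_catl //; lia.
  move: ht; rewrite hd take_oversize; last by rewrite size_cat size_drop hX; lia.
  move=> /eqP; rewrite [R in _ == R](w_split w) eqseq_cat; last by rewrite size_drop su; move: hjl hjA; set n := size A => hjl hjA; lia.
  case/andP => /eqP hu ->; rewrite andbT suffixE su.
  by apply/eqP; rewrite -hu; congr drop; move: hjl hjA; set n := size A => hjl hjA; lia.
case/andP; rewrite suffixE => /eqP hs /eqP ->.
set A2 := take (size A - size u) A.
have -> : A ++ drop p.-1 w = A2 ++ w ++ [::].
  by rewrite cats0 {3}(w_split w) catA -hs cat_take_drop.
by rewrite occ_cat // addn1 addSn.
Qed.

Lemma left_lemma (X C : seq 'I_b) : size X = 1 ->
  (occ w C == 0) && (occ w (X ++ C) != 0) =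
  (X == take 1 w) && (prefix v C && (occ w C == 0)).
Proof.
move=> hX; case h0 : (occ w C == 0); last by rewrite !andbF.
rewrite !andbT /=.
have hw1 : w = take 1 w ++ v by rewrite -drop1 cat_take_drop.
apply/idP/idP.
  rewrite occ_pos => /hasP[j0 _ hj0].
  have [j hj] : exists j : nat, win (X ++ C) j by exists j0.
  have hj' := hj; move: hj'; rewrite /P2.win size_cat hX => /andP[hjl /eqP ht].
  case: (posnP j) => hjz; last first.
    have hc : win C (j - 1) by move: hj; rewrite (@win_catr _ _ hw X C j) ?hX.
    by move: (win_occ hc); rewrite h0.
  move: ht; rewrite hjz drop0 take_cat hX ltnNge hw /=.
  move=> /eqP; rewrite [R in _ == R]hw1 eqseq_cat; last by rewrite size_takel.
  case/andP => -> /eqP ht /=; rewrite prefixE sv -ht.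
  by have -> : p - 1 = p.-1 by lia.
case/andP => /eqP -> hp.
have hC : C = v ++ drop p.-1 C by move: hp; rewrite prefixE sv => /eqP {1}<-; rewrite cat_take_drop.
rewrite hC catA -hw1.
have -> : w ++ drop p.-1 C = [::] ++ w ++ drop p.-1 C by [].
by rewrite occ_cat // addn1 addSn.
Qed.

Lemma sym_lemma n : EP [::] n = T 0 n.
Proof.
set f := fun m => cnt m (fun X => occ w X == 0).
have hb : cnt 1 predT = b by rewrite cnt_predT expn1.
have h1 : f n * cnt 1 predT = f (n + 1) + EP [::] n.
  rewrite -(cnt_prod n 1 (fun X => occ w X == 0) predT).
  rewrite (cnt_split _ _ (fun Y => occ w Y == 0)); congr (_ + _).
    apply: eq_cnt => Y hY /=; rewrite andbT.
    case E : (occ w Y == 0); rewrite ?andbF ?andbT //.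
    apply/eqP; move: (occ_catl_le hw (take n Y) (drop n Y)); rewrite cat_take_drop (eqP E); lia.
  rewrite /EP -[RHS]muln1 -[in RHS](cnt_pred1 (n := 1) (x := drop p.-1 w)); last by rewrite size_drop; lia.
  rewrite -cnt_prod; apply: eq_cnt => Y hY /=; rewrite andbT.
  have -> : occ w Y = occ w (take n Y ++ drop n Y) by rewrite cat_take_drop.
  rewrite right_lemma; last by rewrite size_drop hY; lia.
  by rewrite prefixE take0 eqxx.
have h2 : cnt 1 predT * f n = f (1 + n) + T 0 n.
  rewrite -(cnt_prod 1 n predT (fun X => occ w X == 0)).
  rewrite (cnt_split _ _ (fun Y => occ w Y == 0)); congr (_ + _).
    apply: eq_cnt => Y hY /=.
    case E : (occ w Y == 0); rewrite ?andbF ?andbT //.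
    apply/eqP; move: (occ_catr_le hw (take 1 Y) (drop 1 Y)); rewrite cat_take_drop (eqP E); lia.
  rewrite /T -[RHS]mul1n -[in RHS](cnt_pred1 (n := 1) (x := take 1 w)); last by rewrite size_takel.
  rewrite -cnt_prod; apply: eq_cnt => Y hY /=.
  have -> : occ w Y = occ w (take 1 Y ++ drop 1 Y) by rewrite cat_take_drop.
  rewrite left_lemma //; last by rewrite size_takel // hY; lia.
rewrite (addnC 1 n) in h2.
by apply/eqP; rewrite -(eqn_add2l (f (n + 1))) -h1 -h2 mulnC.
Qed.

End Split.

End P3.
Import P3.

Module P4.
Import GRing.Theory.

Definition Pn (N : nat) (f : nat -> nat) : {poly nat} := \poly_(i < N.+1) f i.

Lemma convP N f g n : n <= N -> conv f g n = ((Pn N f * Pn N g)`_n)%R.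
Proof.
move=> hn; rewrite coefM /conv; apply: eq_bigr => i _.
rewrite !coef_poly.
have h1 : i < N.+1 by have := ltn_ord i; lia.
have h2 : n - i < N.+1 by lia.
by rewrite h1 h2.
Qed.

Lemma conv_assoc f g h n : conv (conv f g) h n = conv f (conv g h) n.
Proof.
have -> : conv (conv f g) h n = ((Pn n f * Pn n g * Pn n h)`_n)%R.
  rewrite coefM /conv; apply: eq_bigr => i _.
  have hi := ltn_ord i.
  rewrite -(convP f g (N := n)) ?coef_poly; last by lia.
  by have -> : n - i < n.+1 by lia.
have -> : conv f (conv g h) n = ((Pn n f * (Pn n g * Pn n h))`_n)%R.
  rewrite coefM /conv; apply: eq_bigr => i _.
  have hi := ltn_ord i.
  rewrite -(convP g h (N := n)) ?coef_poly; last by lia.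
  by rewrite hi.
by rewrite mulrA.
Qed.

Lemma conv_comm f g n : conv f g n = conv g f n.
Proof. by rewrite !(convP _ _ (leqnn n)) mulrC. Qed.

Lemma conv_one f n : conv (fun m => (m == 0)%N : nat) f n = f n.
Proof.
by rewrite /conv big_ord_recl /= subn0 mul1n big1 ?addn0.
Qed.

Lemma eq_conv f1 f2 g1 g2 : f1 =1 f2 -> g1 =1 g2 -> conv f1 g1 =1 conv f2 g2.
Proof. by move=> h1 h2 n; apply: eq_bigr => i _; rewrite h1 h2. Qed.

Local Open Scope ring_scope.

Lemma lcoefE s f n : lcoef (Laurent s f) n = if s <= n then f `|n - s|%N else 0%N.
Proof.
rewrite /lcoef /=; case E : (n - s) => [m|m].
  by have -> : s <= n by lia.
by have -> : (s <= n) = false by lia.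
Qed.

Lemma eqL s1 s2 f1 f2 : s1 = s2 -> f1 =1 f2 -> leq_laurent (Laurent s1 f1) (Laurent s2 f2).
Proof. by move=> -> h n; rewrite !lcoefE h. Qed.

Lemma leqL_refl L : leq_laurent L L.
Proof. by []. Qed.
Lemma leqL_sym L1 L2 : leq_laurent L1 L2 -> leq_laurent L2 L1.
Proof. by move=> h n; rewrite h. Qed.
Lemma leqL_trans L1 L2 L3 : leq_laurent L1 L2 -> leq_laurent L2 L3 -> leq_laurent L1 L3.
Proof. by move=> h1 h2 n; rewrite h1 h2. Qed.

Definition pad (d : nat) (f : nat -> nat) (m : nat) : nat := if (m < d)%N then 0%N else f (m - d)%N.

Lemma leq_pad s d f : leq_laurent (Laurent (s - d%:Z) (pad d f)) (Laurent s f).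
Proof.
move=> n; rewrite !lcoefE /pad.
have [h2|h2] := Num.Theory.lerP s n.
  have h1 : s - d%:Z <= n by lia.
  rewrite h1 ifF; last by lia.
  by congr f; lia.
case: ifP => // h1; rewrite ifT //; lia.
Qed.

Lemma conv_pad d f g n : conv (pad d f) g n = pad d (conv f g) n.
Proof.
rewrite /conv /pad; case: ifP => h.
  by rewrite big1 // => i _; have hi := ltn_ord i; rewrite ifT //; lia.
have -> : n.+1 = (d + (n - d).+1)%N by lia.
rewrite big_split_ord /= big1 ?add0n; last first.
  by move=> i _; have hi := ltn_ord i; rewrite ifT.
apply: eq_bigr => i _; rewrite ifF; last by lia.
have -> : (d + i - d = i)%N by lia.
by have -> : (n - (d + i) = n - d - i)%N by lia.
Qed.

Definition NL (lo : int) (L : laurent) : laurent := Laurent lo (fun m => lcoef L (lo + m%:Z)).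

Lemma lmul_NL_l lo a b : lo <= Defs.lshift a -> leq_laurent (lmul (NL lo a) b) (lmul a b).
Proof.
case: a => sa fa /= h.
set d := `|sa - lo|%N.
apply: (leqL_trans _ (leq_pad (sa + Defs.lshift b) d (conv fa (lps b)))).
apply: eqL => /=; first by rewrite /d; lia.
move=> m; rewrite -conv_pad; apply: (@eq_conv (fun i : nat => lcoef (Laurent sa fa) (lo + i%:Z)) (pad d fa) (lps b) (lps b)) => // i.
rewrite lcoefE /pad; case: ifP => h1; case: ifP => h2 //; try lia.
by congr fa; rewrite /d; lia.
Qed.

Lemma lmul_comm a b : leq_laurent (lmul a b) (lmul b a).
Proof. by apply: eqL; [rewrite addrC | move=> n; exact: conv_comm]. Qed.

Lemma lmul_assoc a b c : leq_laurent (lmul (lmul a b) c) (lmul a (lmul b c)).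
Proof. by apply: eqL; [rewrite addrA | move=> n; exact: conv_assoc]. Qed.

Lemma lmul_NL_r lo a b : lo <= Defs.lshift b -> leq_laurent (lmul a (NL lo b)) (lmul a b).
Proof.
move=> h; apply: leqL_trans (lmul_comm _ _) _.
apply: leqL_trans (lmul_NL_l _ h) _; exact: lmul_comm.
Qed.

Lemma lmul_congr a a' b b' : leq_laurent a a' -> leq_laurent b b' ->
  leq_laurent (lmul a b) (lmul a' b').
Proof.
move=> ha hb.
set la : int := - (`|Defs.lshift a|%:Z + `|Defs.lshift a'|%:Z).
set lb : int := - (`|Defs.lshift b|%:Z + `|Defs.lshift b'|%:Z).
have h1 : la <= Defs.lshift a by rewrite /la; lia.
have h2 : lb <= Defs.lshift b by rewrite /lb; lia.
have h3 : la <= Defs.lshift a' by rewrite /la; lia.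
have h4 : lb <= Defs.lshift b' by rewrite /lb; lia.
have e1 := lmul_NL_l (NL lb b) h1.
have e2 := lmul_NL_r a h2.
have e3 := lmul_NL_l (NL lb b') h3.
have e4 := lmul_NL_r a' h4.
have e5 : leq_laurent (lmul (NL la a) (NL lb b)) (lmul (NL la a') (NL lb b')).
  apply: eqL => //= m; apply: eq_bigr => i _; by rewrite ha hb.
by move=> n; rewrite -(e2 n) -(e1 n) (e5 n) (e3 n) (e4 n).
Qed.

End P4.
Import P4.

Module P5.
Import GRing.Theory.

Section Final.
Variable b : nat.
Variable w : seq 'I_b.
Hypothesis hw : (0 < size w)%N.
Notation p := (size w).
Notation u := (take (size w).-1 w).
Notation v := (behead w).
Notation s := (2%:Z - (size w)%:Z)%R.

Lemma shift_lemma F G :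
  (forall l m, l + p = m + 2 -> F l = G m) ->
  (forall m, m + 2 < p -> G m = 0) ->
  (forall l, l + p < 2 -> F l = 0) ->
  leq_laurent (ps F) (Laurent s G).
Proof.
move=> H1 H2 H3 n; rewrite /ps !lcoefE.
case: ifP => h1; case: ifP => h2.
- by apply: H1; lia.
- by apply: H3; lia.
- by rewrite H2 //; lia.
- by [].
Qed.

Lemma occ_nil : occ w [::] = 0.
Proof. by rewrite /occ /= leqNgt addn0 hw. Qed.

Lemma T_rec j : leq_laurent (ps (T w j.+1)) (lmul (tpow s) (lmul (ps (EP w v)) (ps (T w j)))).
Proof.
apply: (leqL_trans (L2 := Laurent s (conv (EP w v) (T w j)))).
  apply: shift_lemma.
  - by move=> l m hlm; apply: split_lemma => //; rewrite size_behead.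
  - move=> m hm; rewrite /conv big1 // => i _; rewrite EP_small //.
    by have := ltn_ord i; lia.
  - move=> l hl; have -> : l = 0 by lia.
    by rewrite /T cnt0 occ_nil andbF.
apply: eqL => /=; first by rewrite !addr0.
by move=> n; symmetry; exact: conv_one.
Qed.

Lemma N_rec j : leq_laurent (ps (Zw w j.+1)) (lmul (tpow s) (lmul (ps (EP w [::])) (ps (T w j)))).
Proof.
apply: (leqL_trans (L2 := Laurent s (conv (EP w [::]) (T w j)))).
  apply: shift_lemma.
  - move=> l m hlm; rewrite -(@split_lemma b w hw [::] j l m) //.
    rewrite /Zw /Nw (@card_cnt b l (fun X => occ w X == j.+1)); apply: eq_cnt => Y _.
    by rewrite prefixE take0 eqxx.
  - move=> m hm; rewrite /conv big1 // => i _; rewrite EP_small //.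
    by have := ltn_ord i; lia.
  - move=> l hl; have -> : l = 0 by lia.
    by rewrite /Zw /Nw (@card_cnt b 0 (fun X => occ w X == j.+1)) cnt0 occ_nil.
apply: eqL => /=; first by rewrite !addr0.
by move=> n; symmetry; exact: conv_one.
Qed.

Let E := ps (Zw0p w v).
Let M := ps (Zw0 w v u).
Let X := lmul (tpow s) M.

Lemma hE : leq_laurent E (ps (T w 0)).
Proof.
apply: eqL => // l; rewrite /Zw0p /Zw0 (@card_cnt b l (fun X => [&& occ w X == 0, prefix v X & suffix [::] X])); apply: eq_cnt => Y _.
by rewrite suffixE subn0 drop_size eqxx andbT andbC.
Qed.

Lemma hE' : leq_laurent E (ps (EP w [::])).
Proof.
apply: (leqL_trans hE); apply: eqL => // l; by rewrite sym_lemma.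
Qed.

Lemma hM : leq_laurent M (ps (EP w v)).
Proof. by apply: eqL => // l; rewrite /Zw0 (@card_cnt b l (fun X => [&& occ w X == 0, prefix v X & suffix u X])). Qed.

Lemma C1 j : leq_laurent (ps (T w j)) (lmul (lexp X j) E).
Proof.
elim: j => [|j IH].
  apply: leqL_sym; apply: (leqL_trans (L2 := E)); last exact: hE.
  apply: eqL => /=; first by rewrite addr0.
  by move=> n; exact: conv_one.
apply: (leqL_trans (T_rec j)).
apply: (leqL_trans _ (leqL_sym (lmul_assoc _ _ _))).
apply: (leqL_trans (leqL_sym (lmul_assoc _ _ _))).
apply: lmul_congr => //.
apply: lmul_congr => //; exact: leqL_sym hM.
Qed.

End Final.


End P5.
Import P5.

Theorem lemma7 (b : nat) (hb : (2 <= b)%N) (w : seq 'I_b) (hw : (0 < size w)%N)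
  (k : nat) (hk : (1 <= k)%N) :
  let p := size w in
  let u := take p.-1 w in
  let v := behead w in
  leq_laurent (ps (Zw w k))
    (lmul (tpow (2%:Z - p%:Z)%R)
      (lmul (lexp (lmul (tpow (2%:Z - p%:Z)%R) (ps (Zw0 w v u))) k.-1)
            (lmul (ps (Zw0p w v)) (ps (Zw0p w v))))).
Proof.
move=> p u v; case: k hk => [//|j] _ /=.
apply: (leqL_trans (N_rec hw j)).
apply: lmul_congr => //.
set X := lmul (tpow (2%:Z - p%:Z)%R) (ps (Zw0 w v u)).
set E := ps (Zw0p w v).
have hE' : leq_laurent (ps (EP w [::])) E by apply: leqL_sym; exact: hE'.
have hC := C1 hw j.
apply: (leqL_trans (L2 := lmul E (lmul (lexp X j) E))).
  by apply: lmul_congr.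
apply: (leqL_trans (leqL_sym (lmul_assoc _ _ _))).
apply: (leqL_trans _ (lmul_assoc _ _ _)).
apply: lmul_congr => //; exact: lmul_comm.
Qed.
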